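(* Let $\mathfrak{R}=(G,G',S,\phi,\rho,\delta)$ be a reconciliation, $s\in V(S)\setminus L(S)$, and $x\in V(G')\setminus L(G')$ with $\rho(x)=s$. Then $x\in\Sigma(\mathfrak{R})$ if and only if $x$ is a minimal element of $\rho^{-1}(s)$ (with respect to the ancestor order of $G'$).
   Context: All trees are rooted binary trees whose root node has degree 1; every other non-leaf node $x$ has exactly two children $x_l,x_r$; $L(T)$ denotes leaves (root excluded). For nodes of a rooted tree, $y\le x$ means $x$ lies on the path from $y$ to the root. $G$ is a gene tree, $S$ a species tree, $\phi:L(G)\to L(S)$. A tree $G'$ is an extension of $G$ if $G$ is obtained from $G'$ by pruning some subtrees and suppressing degree-2 nodes. A map $\rho:V(G')\to V(S)$ is consistent with $S$ if $\rho(root(G'))=root(S)$ and every node $x$ of $G'$ with two children satisfies (D) $\rho(x)=\rho(x_l)=\rho(x_r)$ or (S) $\rho(x)_l=\rho(x_l)$ and $\rho(x)_r=\rho(x_r)$. A reconciliation $\mathfrak{R}=(G,G',S,\phi,\rho,\delta)$ consists of an extension $G'$ of $G$, a consistent $\rho$ with $\rho|_{L(G)}=\phi$, and an injective partial function $\delta$ from duplications to losses ($L(G')\setminus L(G)$) with $\rho(x)=\rho(\delta(x))$. $\Delta(\mathfrak{R})$ (duplications) is the set of nodes with two children satisfying (D), $\Sigma(\mathfrak{R})$ (speciations) those satisfying (S). *)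

(* Defs.v *)
From mathcomp Require Import all_boot.
Set Implicit Arguments. Unset Strict Implicit. Unset Printing Implicit Defensive.

(* A tree T is represented by a term  t : btree A  (the binary part); the    *)
(* planted root (of degree 1) sits above it.  Vertices are                   *)
(*   None          : the planted root  root(T)                               *)
(*   Some p        : the vertex reached from the top of t by the path p      *)
(*                   (false = left child x_l, true = right child x_r).      *)

Inductive btree (A : Type) : Type :=
| BLeaf of A
| BNode of btree A & btree A.
Arguments BLeaf {A}.
Arguments BNode {A}.

Definition pnode := option (seq bool).

Fixpoint subtree {A} (t : btree A) (p : seq bool) : option (btree A) :=
  match p with
  | [::] => Some t
  | b :: p' => match t with
               | BLeaf _ => None
               | BNode l r => subtree (if b then r else l) p'
               end
  end.

Definition is_vertex {A} (t : btree A) (v : pnode) : bool :=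
  match v with None => true | Some p => isSome (subtree t p) end.

Definition is_leaf {A} (t : btree A) (v : pnode) : bool :=
  match v with
  | None => false
  | Some p => if subtree t p is Some (BLeaf _) then true else false
  end.

Definition leaf_label {A} (t : btree A) (v : pnode) : option A :=
  match v with
  | None => None
  | Some p => if subtree t p is Some (BLeaf a) then Some a else None
  end.

Definition two_children {A} (t : btree A) (v : pnode) : bool :=
  match v with
  | None => false
  | Some p => if subtree t p is Some (BNode _ _) then true else false
  end.

(* left and right child x_l, x_r (meaningful for vertices with two children) *)
Definition lchild (v : pnode) : pnode :=
  match v with None => None | Some p => Some (rcons p false) end.
Definition rchild (v : pnode) : pnode :=
  match v with None => None | Some p => Some (rcons p true) end.

(* ancestor order:  anc_le y x  <->  y <= x  <->  x lies on the path from y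
   to the root *)
Definition anc_le (y x : pnode) : bool :=
  match x, y with
  | None, _ => true
  | Some _, None => false
  | Some px, Some py => prefix px py
  end.

Fixpoint leaves {A} (t : btree A) : seq A :=
  match t with
  | BLeaf a => [:: a]
  | BNode l r => leaves l ++ leaves r
  end.

(* Extensions.  The leaves of G' labelled  Some a  are the leaves a of G;    *)
(* the leaves labelled None are the additional leaves L(G') \ L(G).          *)
(* extends G' G : G is obtained from G' by pruning subtrees (all of whose    *)
(* leaves are outside L(G)) and suppressing the resulting degree-2 nodes.    *)

Definition prunable {A : eqType} (t : btree (option A)) : bool :=
  all (fun o => o == None) (leaves t).

Inductive extends {A : eqType} : btree (option A) -> btree A -> Prop :=
| ext_leaf a : extends (BLeaf (Some a)) (BLeaf a)
| ext_node l r l0 r0 :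
    extends l l0 -> extends r r0 -> extends (BNode l r) (BNode l0 r0)
| ext_prune_r l r t0 :
    extends l t0 -> prunable r -> extends (BNode l r) t0
| ext_prune_l l r t0 :
    extends r t0 -> prunable l -> extends (BNode l r) t0.

Definition dup_cond (rho : pnode -> pnode) (x : pnode) : Prop :=
  rho x = rho (lchild x) /\ rho x = rho (rchild x).

Definition spec_cond {B} (S : btree B) (rho : pnode -> pnode) (x : pnode) : Prop :=
  two_children S (rho x) /\
  rchild (rho x) = rho (rchild x) /\ lchild (rho x) = rho (lchild x).

Definition consistent {A B} (G' : btree A) (S : btree B) (rho : pnode -> pnode) : Prop :=
  rho None = None /\
  (forall v, is_vertex G' v -> is_vertex S (rho v)) /\
  (forall x, two_children G' x -> dup_cond rho x \/ spec_cond S rho x).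

Definition is_dup {A} (G' : btree A) (rho : pnode -> pnode) (x : pnode) : Prop :=
  two_children G' x /\ dup_cond rho x.
Definition is_spec {A B} (G' : btree A) (S : btree B) (rho : pnode -> pnode) (x : pnode) : Prop :=
  two_children G' x /\ spec_cond S rho x.

Definition is_loss {A} (G' : btree (option A)) (v : pnode) : Prop :=
  is_leaf G' v /\ leaf_label G' v = Some None.

(* Reconciliation R = (G, G', S, phi, rho, delta).  Gene leaves are named by
   their (distinct) labels a : A; phi a is the species leaf assigned to a. *)
Definition reconciliation {A : eqType} {B}
    (G : btree A) (G' : btree (option A)) (S : btree B)
    (phi : A -> pnode) (rho : pnode -> pnode) (delta : pnode -> option pnode) : Prop :=
  uniq (leaves G) /\
  (forall a, a \in leaves G -> is_leaf S (phi a)) /\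
  extends G' G /\
  consistent G' S rho /\
  (forall v a, is_leaf G' v -> leaf_label G' v = Some (Some a) -> rho v = phi a) /\
  (forall x y, delta x = Some y ->
     [/\ is_vertex G' x, is_dup G' rho x, is_loss G' y & rho x = rho y]) /\
  (forall x1 x2 y, delta x1 = Some y -> delta x2 = Some y -> x1 = x2).

Definition minimal_in (P : pnode -> Prop) (x : pnode) : Prop :=
  P x /\ forall y, P y -> anc_le y x -> y = x.

(* Main.v *)
Require Import Defs.
From mathcomp Require Import all_boot.

Lemma subtree_cat {A} (t : btree A) p q :
  subtree t (p ++ q) = obind (fun t' => subtree t' q) (subtree t p).
Proof.
elim: p t => [|b p IH] [a|l r] //=; by case: q.
Qed.

Lemma anc_le_trans x y z : anc_le x y -> anc_le y z -> anc_le x z.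
Proof.
case: z => [pz|] //; case: y => [py|] //; case: x => [px|] //=.
move=> h1 h2; exact: prefix_trans h2 h1.
Qed.

Lemma mono {A B} (G' : btree A) (S : btree B) rho :
  consistent G' S rho ->
  forall q p, is_vertex G' (Some (p ++ q)) ->
    anc_le (rho (Some (p ++ q))) (rho (Some p)).
Proof.
move=> [_ [_ Hc]].
elim=> [|b q IH] p.
- rewrite cats0 => _; case: (rho (Some p)) => [r|] //=; exact: prefix_refl.
- move=> Hv.
  have E : p ++ b :: q = rcons p b ++ q by rewrite -cats1 -catA.
  rewrite E in Hv *.
  apply: anc_le_trans (IH _ Hv) _.
  have H2 : two_children G' (Some p).
    move: Hv; rewrite /= subtree_cat -cats1 subtree_cat.
    case: (subtree G' p) => [[a|l r]|] //=; by case: b.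
  case: (Hc _ H2) => [[e1 e2]|[Ht [e1 e2]]].
  + clear E Hv IH; case: b; [rewrite -[Some (rcons p true)]/(rchild (Some p)) -e2
             |rewrite -[Some (rcons p false)]/(lchild (Some p)) -e1];
    case: (rho (Some p)) => [r|] //=; exact: prefix_refl.
  + clear E Hv IH; case: b; [rewrite -[Some (rcons p true)]/(rchild (Some p)) -e1
             |rewrite -[Some (rcons p false)]/(lchild (Some p)) -e2];
    case: (rho (Some p)) => [r|] //=; exact: prefix_rcons.
Qed.

Theorem lemma3 (A : eqType) (B : Type)
    (G : btree A) (G' : btree (option A)) (S : btree B)
    (phi : A -> pnode) (rho : pnode -> pnode) (delta : pnode -> option pnode)
    (s x : pnode) :
  reconciliation G G' S phi rho delta ->
  is_vertex S s -> ~~ is_leaf S s ->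
  is_vertex G' x -> ~~ is_leaf G' x -> x <> None ->
  rho x = s ->
  (is_spec G' S rho x <->
   minimal_in (fun y => is_vertex G' y /\ rho y = s) x).
Proof.
move=> [_ [_ [_ [Hcons _]]]] _ _ Hvx Hlx Hxn Hrx.
case: x Hvx Hlx Hxn Hrx => [p|] // Hvx Hlx _ Hrx.
have H2 : two_children G' (Some p).
  move: Hvx Hlx => /=; by case: (subtree G' p) => [[a|l r]|].
split.
- move=> [_ [Ht [e1 e2]]].
  split; first by [].
  move=> [q|] [Hvy Hry] //= /prefixP [r Er]; subst q.
  case: r Hvy Hry => [|b r] Hvy Hry; first by rewrite cats0.
  exfalso.
  have E : p ++ b :: r = rcons p b ++ r by rewrite -cats1 -catA.
  rewrite E in Hvy Hry.
  have M := @mono _ _ G' S rho Hcons _ _ Hvy; rewrite Hry in M.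
  move: M Ht e1 e2; rewrite Hrx.
  case: s {Hrx Hry} => [ps|] // M _ e1 e2.
  have : prefix (rcons ps b) ps.
    clear E Hvy; case: b M; [rewrite -[Some (rcons p true)]/(rchild (Some p)) -e1
               |rewrite -[Some (rcons p false)]/(lchild (Some p)) -e2]; done.
  move/size_prefix; rewrite size_rcons; by rewrite ltnn.
- move=> [_ Hmin].
  case: Hcons => [_ [Hv Hc]].
  case: (Hc _ H2) => [[e1 e2]|Hs]; last by split.
  exfalso.
  have Hvl : is_vertex G' (lchild (Some p)).
    move: H2; rewrite /= -cats1 subtree_cat. by case: (subtree G' p) => [[a|[?|? ?] r]|].
  have Hr : rho (lchild (Some p)) = s by rewrite -e1.
  have Ha : anc_le (lchild (Some p)) (Some p) by rewrite /= prefix_rcons.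
  have := Hmin _ (conj Hvl Hr) Ha.
  case=> /(f_equal size).
  by rewrite size_rcons => /esym/n_Sn.
Qed.
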